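(* Let $\mathcal A$ be a Banach algebra and let $X$ be a left Banach $\mathcal A$-submodule of $\mathcal A^*$. Let $f\in B_{\mathcal A}(\mathcal A,X^* )^*$. Then $f\in Q_X$ if and only if there are sequences $(a_i)\subseteq\mathcal A$ and $(f_i)\subseteq X$ with $\sum_{i=1}^\infty\|a_i\|\|f_i\|<\infty$ such that $f=\sum_{i=1}^\infty a_if_i$. Moreover, for $f\in Q_X$, $$\|f\|_M=\inf\Big\{\sum_{i=1}^\infty\|a_i\|\|f_i\| : f=\sum_{i=1}^\infty a_if_i,\ \sum_{i=1}^\infty\|a_i\|\|f_i\|<\infty\Big\},$$ where $\|f\|_M$ is the norm of $f$ as a functional on $B_{\mathcal A}(\mathcal A,X^* )$.
   Context: $\mathcal A^*$ is a left Banach $\mathcal A$-module via $\langle a\cdot f,b\rangle=\langle f,ba\rangle$; $X$ is a closed subspace of $\mathcal A^*$ invariant under this action. $X^*$ is a right Banach $\mathcal A$-module via $\langle m\cdot a,f\rangle=\langle m,a\cdot f\rangle$. $B_{\mathcal A}(\mathcal A,X^* )$ is the Banach space of bounded linear maps $T:\mathcal A\to X^*$ with $T(ab)=T(a)\cdot b$, with the operator norm $\|\cdot\|_M$. For $a\in\mathcal A$, $f\in X$, $af\in B_{\mathcal A}(\mathcal A,X^* )^*$ is given by $\langle af,T\rangle=\langle f,T(a)\rangle$. $Q_X$ is the norm closure in $B_{\mathcal A}(\mathcal A,X^* )^*$ of the span of $\{af:a\in\mathcal A,f\in X\}$. *)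

(* Defs.v *)
(* Complex scalars are R[i] (complex R
   from mathcomp-real-closed) for R : realType; all norms are taken real-valued
   via Re `|.|  (for z : R[i], `|z| = (Re `|z|)%:C). *)
From mathcomp Require Import all_boot all_order all_algebra.
From mathcomp Require Import all_classical all_reals all_analysis.
From mathcomp Require Import complex.
Set Implicit Arguments. Unset Strict Implicit. Unset Printing Implicit Defensive.
Import Order.TTheory GRing.Theory Num.Theory.
Import numFieldNormedType.Exports.
Local Open Scope classical_set_scope.
Local Open Scope ring_scope.
Local Open Scope complex_scope.

Section BanachModuleDefs.
Variable R : realType.
Variable A : completeNormedModType R[i].
Variable mul : A -> A -> A.

Definition nrmC (z : R[i]) : R := complex.Re `|z|.
Definition nrmA (a : A) : R := complex.Re `|a|.

Definition banach_algebra_mul : Prop :=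
  [/\ (forall (k : R[i]) a b c, mul (k *: a + b) c = k *: mul a c + mul b c),
      (forall (k : R[i]) a b c, mul a (k *: b + c) = k *: mul a b + mul a c),
      (forall a b c, mul (mul a b) c = mul a (mul b c)) &
      (forall a b, nrmA (mul a b) <= nrmA a * nrmA b)].

Definition in_dualA (phi : A -> R[i]) : Prop :=
  (forall (k : R[i]) a b, phi (k *: a + b) = k * phi a + phi b) /\
  exists c : R, forall a, nrmC (phi a) <= c * nrmA a.

Definition dnorm (phi : A -> R[i]) : R :=
  sup [set nrmC (phi a) | a in [set a | nrmA a <= 1]].

Definition actL (a : A) (phi : A -> R[i]) : A -> R[i] := fun b => phi (mul b a).

Definition closed_left_submodule (X : set (A -> R[i])) : Prop :=
  [/\ (forall phi, X phi -> in_dualA phi),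
      X (fun _ => 0),
      (forall (k : R[i]) phi psi, X phi -> X psi -> X (fun b => k * phi b + psi b)),
      (forall phi, in_dualA phi ->
         (forall eps : R, 0 < eps -> exists2 psi, X psi & dnorm (fun b => phi b - psi b) <= eps) ->
         X phi) &
      (forall a phi, X phi -> X (actL a phi))].

Variable X : set (A -> R[i]).

(* X^* : bounded linear functionals on X (only their values on X matter) *)
Definition in_dualX (m : (A -> R[i]) -> R[i]) : Prop :=
  (forall (k : R[i]) phi psi, X phi -> X psi ->
     m (fun b => k * phi b + psi b) = k * m phi + m psi) /\
  exists c : R, forall phi, X phi -> nrmC (m phi) <= c * dnorm phi.

Definition xnorm (m : (A -> R[i]) -> R[i]) : R :=
  sup [set nrmC (m phi) | phi in [set phi | X phi /\ dnorm phi <= 1]].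

(* B_A(A, X^* ) : bounded linear right module maps T : A -> X^*,
   T (a b) = T(a).b  where <m.b, f> = <m, b.f> *)
Definition in_BA (T : A -> (A -> R[i]) -> R[i]) : Prop :=
  [/\ (forall a, in_dualX (T a)),
      (forall (k : R[i]) a b phi, X phi -> T (k *: a + b) phi = k * T a phi + T b phi),
      (exists c : R, forall a, xnorm (T a) <= c * nrmA a) &
      (forall a b phi, X phi -> T (mul a b) phi = T a (actL b phi))].

Definition Mnorm (T : A -> (A -> R[i]) -> R[i]) : R :=
  sup [set xnorm (T a) | a in [set a | nrmA a <= 1]].

Definition in_dualBA (F : (A -> (A -> R[i]) -> R[i]) -> R[i]) : Prop :=
  (forall (k : R[i]) T S, in_BA T -> in_BA S ->
     F (fun a phi => k * T a phi + S a phi) = k * F T + F S) /\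
  exists c : R, forall T, in_BA T -> nrmC (F T) <= c * Mnorm T.

Definition dMnorm (F : (A -> (A -> R[i]) -> R[i]) -> R[i]) : R :=
  sup [set nrmC (F T) | T in [set T | in_BA T /\ Mnorm T <= 1]].

(* the element a f of B_A(A, X^* )^* : <a f, T> = <f, T(a)> = T a f *)
Definition elem (a : A) (phi : A -> R[i]) : (A -> (A -> R[i]) -> R[i]) -> R[i] :=
  fun T => T a phi.

(* the linear span of { a f : a in A, f in X } (scalars absorbed in a) *)
Definition in_span (F : (A -> (A -> R[i]) -> R[i]) -> R[i]) : Prop :=
  exists (n : nat) (a : 'I_n -> A) (phi : 'I_n -> A -> R[i]),
    (forall i, X (phi i)) /\
    F = fun T => \sum_(i < n) elem (a i) (phi i) T.

Definition in_QX (F : (A -> (A -> R[i]) -> R[i]) -> R[i]) : Prop :=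
  in_dualBA F /\
  forall eps : R, 0 < eps ->
    exists2 G, in_span G & dMnorm (fun T => F T - G T) <= eps.

Definition is_rep (F : (A -> (A -> R[i]) -> R[i]) -> R[i])
    (a : nat -> A) (phi : nat -> A -> R[i]) : Prop :=
  [/\ (forall i, X (phi i)),
      cvgn (series (fun i => nrmA (a i) * dnorm (phi i))) &
      (fun n => dMnorm (fun T => F T - \sum_(0 <= i < n) elem (a i) (phi i) T))
        @ \oo --> (0 : R)].

Definition rep_cost (a : nat -> A) (phi : nat -> A -> R[i]) : R :=
  limn (series (fun i => nrmA (a i) * dnorm (phi i))).

End BanachModuleDefs.

(* Main.v *)
Require Import Defs.
From mathcomp Require Import all_boot all_order all_algebra.
From mathcomp Require Import all_classical all_reals all_analysis.
From mathcomp Require Import complex.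
From mathcomp Require Import ring lra.
Set Implicit Arguments. Unset Strict Implicit. Unset Printing Implicit Defensive.
Import Order.TTheory GRing.Theory Num.Theory.
Import numFieldNormedType.Exports.
Local Open Scope classical_set_scope.
Local Open Scope ring_scope.
Local Open Scope complex_scope.

Section CHelp.
Variable R : realType.

Lemma ge0_realC (z : R[i]) : 0 <= z -> z = (complex.Re z)%:C.
Proof. move=> z0; rewrite [LHS]complexE (ger0_Im z0) mulr0 addr0 //. Qed.

Lemma normCE (z : R[i]) : `|z| = (nrmC z)%:C.
Proof. by rewrite /nrmC -ge0_realC. Qed.

Lemma nrmC_ge0 (z : R[i]) : 0 <= nrmC z.
Proof. rewrite -lecR -normCE; exact: normr_ge0. Qed.

Lemma nrmCM (x y : R[i]) : nrmC (x * y) = nrmC x * nrmC y.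
Proof. apply: (@complexI R); by rewrite -normCE normrM !normCE -rmorphM. Qed.

Lemma nrmCD (x y : R[i]) : nrmC (x + y) <= nrmC x + nrmC y.
Proof. by rewrite -lecR rmorphD -!normCE ler_normD. Qed.

Lemma nrmCR (r : R) : nrmC r%:C = `|r|.
Proof. by rewrite /nrmC normc_def /= expr0n addr0 sqrtr_sqr. Qed.

Lemma nrmCN (x : R[i]) : nrmC (- x) = nrmC x.
Proof. by rewrite /nrmC normrN. Qed.

Lemma nrmC0 : nrmC (0 : R[i]) = 0.
Proof. by rewrite /nrmC normr0. Qed.

Lemma nrmC_eq0 (x : R[i]) : nrmC x = 0 -> x = 0.
Proof. by move=> h; apply/eqP; rewrite -normr_eq0 normCE h. Qed.

Lemma Re_le_nrmC (x : R[i]) : complex.Re x <= nrmC x.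
Proof.
have := normc_ge_Re x; rewrite normCE lecR => h.
by apply: le_trans h; apply: ler_norm.
Qed.

Lemma ReD (x y : R[i]) : complex.Re (x + y) = complex.Re x + complex.Re y.
Proof. by case: x; case: y. Qed.

Lemma ReR (r : R) : complex.Re r%:C = r.
Proof. by []. Qed.

Lemma Re_sub_i (a b : R) : complex.Re (a%:C - 'i * b%:C) = a.
Proof. by rewrite /= !mul0r !mul1r subr0 oppr0 addr0. Qed.

End CHelp.

Section Main.
Variable R : realType.
Variable A : completeNormedModType R[i].
Variable mul : A -> A -> A.
Variable X : set (A -> R[i]).
Hypothesis HX : closed_left_submodule mul X.

Local Notation C := R[i].
Local Notation Tsp := (A -> (A -> C) -> C).
Local Notation Fn := (Tsp -> C).
Local Notation BA := (in_BA mul X).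
Local Notation Z0 := (fun _ : A => (0 : C)).

Lemma X_dual phi : X phi -> in_dualA phi.
Proof. by case: HX => h _ _ _ _; apply: h. Qed.
Lemma X0 : X Z0.
Proof. by case: HX. Qed.
Lemma X_lin k phi psi : X phi -> X psi -> X (fun b => k * phi b + psi b).
Proof. by case: HX => _ _ h _ _; apply: h. Qed.
Lemma X_act a phi : X phi -> X (actL mul a phi).
Proof. by case: HX => _ _ _ _ h; apply: h. Qed.
Lemma X_scale k phi : X phi -> X (fun b => k * phi b + 0).
Proof. by move=> h; apply: (X_lin k h X0). Qed.

Lemma nrmA_C (a : A) : `|a| = (nrmA a)%:C.
Proof. exact: (ge0_realC (normr_ge0 a)). Qed.
Lemma nrmA_ge0 (a : A) : 0 <= nrmA a.
Proof. rewrite -lecR -nrmA_C; exact: normr_ge0. Qed.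
Lemma nrmA0 : nrmA (0 : A) = 0.
Proof. by rewrite /nrmA normr0. Qed.
Lemma nrmAZ (k : C) (a : A) : nrmA (k *: a) = nrmC k * nrmA a.
Proof.
apply: (@complexI R); by rewrite -nrmA_C normrZ normCE nrmA_C -rmorphM.
Qed.

Lemma dual_bnd (phi : A -> C) : in_dualA phi -> exists c, 0 <= c /\ forall a, nrmA a <= 1 -> nrmC (phi a) <= c.
Proof.
case=> _ [c hc]; exists `|c|; split => // a ha.
apply: (le_trans (hc a)); apply: (le_trans (ler_norm _)).
rewrite normrM (ger0_norm (nrmA_ge0 a)); rewrite -[X in _ <= X]mulr1.
by apply: ler_wpM2l.
Qed.

Lemma dnorm_ub (phi : A -> C) a : in_dualA phi -> nrmA a <= 1 -> nrmC (phi a) <= dnorm phi.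
Proof.
move=> /dual_bnd [c [c0 hc]] ha; apply: ub_le_sup; last by exists a.
by exists c => _ [b hb <-]; apply: hc.
Qed.

Lemma dnorm_ge0 (phi : A -> C) : in_dualA phi -> 0 <= dnorm phi.
Proof.
move=> h; apply: le_trans (dnorm_ub (a:=0) h _); first exact: nrmC_ge0.
by rewrite nrmA0.
Qed.

Lemma dnorm_le (phi : A -> C) r : (forall a, nrmA a <= 1 -> nrmC (phi a) <= r) -> dnorm phi <= r.
Proof.
move=> h; apply: ge_sup; first by exists (nrmC (phi 0)), 0; rewrite /= ?nrmA0 //.
by move=> _ [a ha <-]; apply: h.
Qed.

Lemma dnorm_scale k (phi : A -> C) : in_dualA phi -> dnorm (fun b => k * phi b + 0) <= nrmC k * dnorm phi.
Proof.
move=> h; apply: dnorm_le => a ha; rewrite addr0 nrmCM.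
by apply: ler_wpM2l; [exact: nrmC_ge0 | exact: dnorm_ub].
Qed.

Lemma dnormZ0 : dnorm Z0 <= 0.
Proof. by apply: dnorm_le => a _; rewrite nrmC0. Qed.

Local Notation MX := ((A -> C) -> C).

Lemma dnormZ0_le1 : dnorm Z0 <= 1.
Proof. exact: le_trans dnormZ0 ler01. Qed.

Lemma dualX_bnd (m : MX) : in_dualX X m ->
  exists c, 0 <= c /\ forall phi, X phi -> dnorm phi <= 1 -> nrmC (m phi) <= c.
Proof.
case=> _ [c hc]; exists `|c|; split => // phi hphi hd.
apply: (le_trans (hc phi hphi)); apply: (le_trans (ler_norm _)).
rewrite normrM (ger0_norm (dnorm_ge0 (X_dual hphi))) -[X in _ <= X]mulr1.
by apply: ler_wpM2l.
Qed.

Lemma xnorm_ub (m : MX) phi : in_dualX X m -> X phi -> dnorm phi <= 1 ->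
  nrmC (m phi) <= xnorm X m.
Proof.
move=> /dualX_bnd [c [c0 hc]] hphi hd; apply: ub_le_sup; last by exists phi.
by exists c => _ [psi [h1 h2] <-]; apply: hc.
Qed.

Lemma xnorm_le (m : MX) r : (forall phi, X phi -> dnorm phi <= 1 -> nrmC (m phi) <= r) ->
  xnorm X m <= r.
Proof.
move=> h; apply: ge_sup; first by exists (nrmC (m Z0)), Z0; split; [exact: X0 | exact: dnormZ0_le1].
by move=> _ [phi [h1 h2] <-]; apply: h.
Qed.

Lemma xnorm_ge0 (m : MX) : in_dualX X m -> 0 <= xnorm X m.
Proof.
move=> h; apply: le_trans (xnorm_ub h X0 dnormZ0_le1); exact: nrmC_ge0.
Qed.

Lemma mZ0 (m : MX) : in_dualX X m -> m Z0 = 0.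
Proof.
case=> hl _; have := hl 1 Z0 Z0 X0 X0.
have -> : (fun b : A => 1 * Z0 b + Z0 b) = Z0 by apply: funext => b; rewrite mul1r addr0.
rewrite mul1r => h; apply: (addrI (m Z0)); rewrite addr0; exact: (esym h).
Qed.

Lemma m_scale (m : MX) k phi : in_dualX X m -> X phi -> m (fun b => k * phi b + 0) = k * m phi.
Proof.
move=> hm hphi; case: (hm) => hl _; have := hl k phi Z0 hphi X0.
by rewrite (mZ0 hm) addr0.
Qed.

Lemma xnorm_bound (m : MX) phi : in_dualX X m -> X phi -> nrmC (m phi) <= xnorm X m * dnorm phi.
Proof.
move=> hm hphi; have d0 := dnorm_ge0 (X_dual hphi).
have [d_eq0|dn0] := eqVneq (dnorm phi) 0.
  case: (hm) => _ [c hc]; apply: (le_trans (hc phi hphi)); by rewrite d_eq0 !mulr0.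
have dpos : 0 < dnorm phi by rewrite lt_def dn0 d0.
set d := dnorm phi in d0 dn0 dpos *.
pose phi' := fun b => (d^-1)%:C * phi b + 0.
have Xp : X phi' by apply: X_scale.
have hd : dnorm phi' <= 1.
  apply: (le_trans (dnorm_scale _ (X_dual hphi))).
  by rewrite nrmCR ger0_norm ?invr_ge0 // mulVf.
have := xnorm_ub hm Xp hd; rewrite /phi' (m_scale _ hm hphi) nrmCM nrmCR ger0_norm ?invr_ge0 //.
move=> h; have -> : nrmC (m phi) = d * (d^-1 * nrmC (m phi)) by rewrite mulrA mulfV // mul1r.
rewrite [X in _ <= X]mulrC.
by apply: ler_wpM2l.


Qed.

Lemma xnorm_scale (m : MX) k : in_dualX X m -> xnorm X (fun phi => k * m phi + 0) <= nrmC k * xnorm X m.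
Proof.
move=> hm; apply: xnorm_le => phi hphi hd; rewrite addr0 nrmCM.
by apply: ler_wpM2l; [exact: nrmC_ge0 | exact: xnorm_ub].
Qed.

Lemma BA_dualX T a : BA T -> in_dualX X (T a).
Proof. by case=> h _ _ _; apply: h. Qed.

Lemma T0 T phi : BA T -> X phi -> T 0 phi = 0.
Proof.
case=> _ hl _ _ hphi; have := hl 1 0 0 phi hphi.
rewrite scale1r addr0 mul1r => h; apply: (addrI (T 0 phi)); rewrite addr0; exact: (esym h).
Qed.

Lemma TZ T k a phi : BA T -> X phi -> T (k *: a) phi = k * T a phi.
Proof.
move=> hT hphi; case: (hT) => _ hl _ _; have := hl k a 0 phi hphi.
by rewrite addr0 (T0 hT hphi) addr0.
Qed.

Lemma BA_xbnd T : BA T -> exists c, 0 <= c /\ forall a, nrmA a <= 1 -> xnorm X (T a) <= c.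
Proof.
case=> _ _ [c hc] _; exists `|c|; split => // a ha.
apply: (le_trans (hc a)); apply: (le_trans (ler_norm _)).
rewrite normrM (ger0_norm (nrmA_ge0 a)) -[X in _ <= X]mulr1.
by apply: ler_wpM2l.
Qed.

Lemma Mnorm_ub T a : BA T -> nrmA a <= 1 -> xnorm X (T a) <= Mnorm X T.
Proof.
move=> /BA_xbnd [c [c0 hc]] ha; apply: ub_le_sup; last by exists a.
by exists c => _ [b hb <-]; apply: hc.
Qed.

Lemma Mnorm_le T r : (forall a, nrmA a <= 1 -> xnorm X (T a) <= r) -> Mnorm X T <= r.
Proof.
move=> h; apply: ge_sup; first by exists (xnorm X (T 0)), 0; rewrite /= ?nrmA0 //.
by move=> _ [a ha <-]; apply: h.
Qed.

Lemma Mnorm_ge0 T : BA T -> 0 <= Mnorm X T.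
Proof.
move=> hT; apply: le_trans (Mnorm_ub (a := 0) hT _); last by rewrite nrmA0.
exact: xnorm_ge0 (BA_dualX 0 hT).
Qed.

Lemma xnorm_T T a : BA T -> xnorm X (T a) <= Mnorm X T * nrmA a.
Proof.
move=> hT; have n0 := nrmA_ge0 a.
have [n_eq0|nn0] := eqVneq (nrmA a) 0.
  case: (hT) => _ _ [c hc] _; apply: (le_trans (hc a)); by rewrite n_eq0 !mulr0.
have npos : 0 < nrmA a by rewrite lt_def nn0 n0.
set n := nrmA a in n0 nn0 npos *.
pose a' := (n^-1)%:C *: a.
have ha' : nrmA a' <= 1 by rewrite nrmAZ nrmCR ger0_norm ?invr_ge0 // mulVf.
have h1 := Mnorm_ub hT ha'.
have h2 : xnorm X (T a) <= n * xnorm X (T a').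
  apply: xnorm_le => phi hphi hd.
  have := xnorm_ub (BA_dualX a' hT) hphi hd.
  rewrite /a' (TZ _ _ hT hphi) nrmCM nrmCR ger0_norm ?invr_ge0 // => h.
  have -> : nrmC (T a phi) = n * (n^-1 * nrmC (T a phi)) by rewrite mulrA mulfV // mul1r.
  by apply: ler_wpM2l.
apply: (le_trans h2); rewrite [X in _ <= X]mulrC; exact: ler_wpM2l.
Qed.

Lemma T_bound T a phi : BA T -> X phi -> nrmC (T a phi) <= Mnorm X T * nrmA a * dnorm phi.
Proof.
move=> hT hphi; apply: (le_trans (xnorm_bound (BA_dualX a hT) hphi)).
apply: ler_wpM2r; [exact: dnorm_ge0 (X_dual hphi) | exact: xnorm_T].
Qed.

Local Notation T00 := (fun (_ : A) (_ : A -> C) => (0 : C)).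

Lemma BA0 : BA T00.
Proof.
split.
- move=> a; split; first by move=> k phi psi _ _; rewrite mulr0 addr0.
  by exists 0 => phi _; rewrite nrmC0 mul0r.
- by move=> k a b phi _; rewrite mulr0 addr0.
- by exists 0 => a; rewrite mul0r; apply: xnorm_le => phi _ _; rewrite nrmC0.
- by [].
Qed.

Lemma Mnorm0 : Mnorm X T00 <= 1.
Proof.
apply: Mnorm_le => a _; apply: xnorm_le => phi _ _; rewrite nrmC0; exact: ler01.
Qed.

Lemma BA_scale T k : BA T -> BA (fun a phi => k * T a phi + 0).
Proof.
move=> hT; case: (hT) => hd hl [c hc] hm; split.
- move=> a; case: (hd a) => hla [c' hc']; split.
    by move=> kk phi psi hphi hpsi; rewrite hla //; ring.
  exists (nrmC k * c') => phi hphi; rewrite addr0 nrmCM -mulrA.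
  by apply: ler_wpM2l; [exact: nrmC_ge0 | exact: hc'].
- by move=> kk a b phi hphi; rewrite hl //; ring.
- exists (nrmC k * c) => a; apply: (le_trans (xnorm_scale k (hd a))).
  rewrite -mulrA; apply: ler_wpM2l; [exact: nrmC_ge0 | exact: hc].
- by move=> a b phi hphi; rewrite hm.
Qed.

Lemma Mnorm_scale T k : BA T -> Mnorm X (fun a phi => k * T a phi + 0) <= nrmC k * Mnorm X T.
Proof.
move=> hT; apply: Mnorm_le => a ha.
apply: (le_trans (xnorm_scale k (BA_dualX a hT))).
apply: ler_wpM2l; [exact: nrmC_ge0 | exact: Mnorm_ub].
Qed.

Definition linH (H : Fn) := forall k T S, BA T -> BA S ->
  H (fun a phi => k * T a phi + S a phi) = k * H T + H S.
Definition bndH (H : Fn) (c : R) := forall T, BA T -> nrmC (H T) <= c * Mnorm X T.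
Definition goodH (H : Fn) := linH H /\ exists c, bndH H c.

Lemma H0 H : linH H -> H T00 = 0.
Proof.
move=> hl; have := hl 1 _ _ BA0 BA0.
have -> : (fun a phi => 1 * T00 a phi + T00 a phi) = T00.
  by apply: funext => a; apply: funext => phi; rewrite mulr0 addr0.
rewrite mul1r => h; apply: (addrI (H T00)); rewrite addr0; exact: (esym h).
Qed.

Lemma Hscale H k T : linH H -> BA T -> H (fun a phi => k * T a phi + 0) = k * H T.
Proof.
move=> hl hT; have := hl k _ _ hT BA0; by rewrite (H0 hl) addr0.
Qed.

Lemma bnd_ge0 H c : bndH H c -> exists c', 0 <= c' /\ bndH H c'.
Proof.
move=> h; exists `|c|; split => // T hT; apply: (le_trans (h T hT)).
apply: ler_wpM2r; [exact: Mnorm_ge0 | exact: ler_norm].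
Qed.

Lemma dMnorm_ub H T : (exists c, bndH H c) -> BA T -> Mnorm X T <= 1 -> nrmC (H T) <= dMnorm mul X H.
Proof.
move=> [c0 /bnd_ge0 [c [c0' hc]]] hT hM; apply: ub_le_sup; last by exists T.
exists c => _ [S [hS hMS] <-]; apply: (le_trans (hc S hS)).
rewrite -[X in _ <= X]mulr1; exact: ler_wpM2l.
Qed.

Lemma dMnorm_le H c : bndH H c -> 0 <= c -> dMnorm mul X H <= c.
Proof.
move=> hc c0; apply: ge_sup; first by exists (nrmC (H T00)), T00; split; [exact: BA0 | exact: Mnorm0].
move=> _ [T [hT hM] <-]; apply: (le_trans (hc T hT)).
rewrite -[X in _ <= X]mulr1; exact: ler_wpM2l.
Qed.

Lemma dMnorm_ge0 H : (exists c, bndH H c) -> 0 <= dMnorm mul X H.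
Proof.
move=> h; apply: le_trans (dMnorm_ub h BA0 Mnorm0); exact: nrmC_ge0.
Qed.

Lemma dMnorm_bnd H : goodH H -> bndH H (dMnorm mul X H).
Proof.
move=> [hl hb] T hT; have m0 := Mnorm_ge0 hT.
have [m_eq0|mn0] := eqVneq (Mnorm X T) 0.
  case: hb => c hc; apply: (le_trans (hc T hT)); by rewrite m_eq0 !mulr0.
set m := Mnorm X T in m0 mn0 *.
have hT' := BA_scale (m^-1)%:C hT.
have hM' : Mnorm X (fun a phi => (m^-1)%:C * T a phi + 0) <= 1.
  apply: (le_trans (Mnorm_scale _ hT)).
  by rewrite nrmCR ger0_norm ?invr_ge0 // mulVf.
have := dMnorm_ub hb hT' hM'; rewrite (Hscale _ hl hT) nrmCM nrmCR ger0_norm ?invr_ge0 // => h.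
have -> : nrmC (H T) = m * (m^-1 * nrmC (H T)) by rewrite mulrA mulfV // mul1r.
rewrite [X in _ <= X]mulrC; exact: ler_wpM2l.
Qed.

Lemma goodD H1 H2 : goodH H1 -> goodH H2 -> goodH (fun T => H1 T + H2 T).
Proof.
move=> [l1 [c1 b1]] [l2 [c2 b2]]; split.
  by move=> k T S hT hS; rewrite l1 // l2 //; ring.
exists (c1 + c2) => T hT; apply: (le_trans (nrmCD _ _)); rewrite mulrDl.
by apply: lerD; [exact: b1 | exact: b2].
Qed.

Lemma goodB H1 H2 : goodH H1 -> goodH H2 -> goodH (fun T => H1 T - H2 T).
Proof.
move=> [l1 [c1 b1]] [l2 [c2 b2]]; split.
  by move=> k T S hT hS; rewrite l1 // l2 //; ring.
exists (c1 + c2) => T hT; apply: (le_trans (nrmCD _ _)); rewrite mulrDl nrmCN.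
by apply: lerD; [exact: b1 | exact: b2].
Qed.

Lemma dMnorm_le_pt H c1 c2 : goodH H -> 0 <= c1 + c2 ->
  (forall T, BA T -> nrmC (H T) <= (c1 + c2) * Mnorm X T) -> dMnorm mul X H <= c1 + c2.
Proof. by move=> _ h0 h; apply: dMnorm_le. Qed.

Definition lst := seq (A * (A -> C)).
Fixpoint Xl (s : lst) : Prop := if s is p :: s' then X p.2 /\ Xl s' else True.
Definition evl (s : lst) : Fn := fun T => \sum_(p <- s) T p.1 p.2.
Definition costl (s : lst) : R := \sum_(p <- s) nrmA p.1 * dnorm p.2.

Lemma Xl_cat s t : Xl s -> Xl t -> Xl (s ++ t).
Proof. by elim: s => //= p s IH [h1 h2] ht; split => //; apply: IH. Qed.

Lemma evl_cat s t T : evl (s ++ t) T = evl s T + evl t T.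
Proof. by rewrite /evl big_cat. Qed.

Lemma costl_cat s t : costl (s ++ t) = costl s + costl t.
Proof. by rewrite /costl big_cat. Qed.

Lemma evl_cons p s T : evl (p :: s) T = T p.1 p.2 + evl s T.
Proof. by rewrite /evl big_cons. Qed.

Lemma costl_cons p s : costl (p :: s) = nrmA p.1 * dnorm p.2 + costl s.
Proof. by rewrite /costl big_cons. Qed.

Lemma evl_nil T : evl [::] T = 0.
Proof. by rewrite /evl big_nil. Qed.

Lemma costl_nil : costl [::] = 0.
Proof. by rewrite /costl big_nil. Qed.

Lemma costl_ge0 s : Xl s -> 0 <= costl s.
Proof.
elim: s => [|p s IH] /=; first by rewrite costl_nil.
move=> [hp hs]; rewrite costl_cons; apply: addr_ge0; last exact: IH.
by apply: mulr_ge0; [exact: nrmA_ge0 | exact: dnorm_ge0 (X_dual hp)].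
Qed.

Lemma evl_bnd s : Xl s -> bndH (evl s) (costl s).
Proof.
move=> hs T hT; elim: s hs => [|p s IH] /=.
  by rewrite evl_nil costl_nil nrmC0 mul0r.
move=> [hp hs]; rewrite evl_cons costl_cons mulrDl.
apply: (le_trans (nrmCD _ _)); apply: lerD; last exact: IH.
by rewrite [_ * Mnorm X T]mulrC mulrA; apply: T_bound.
Qed.

Lemma evl_good s : Xl s -> goodH (evl s).
Proof.
move=> hs; split; last by exists (costl s); apply: evl_bnd.
move=> k T S _ _; rewrite /evl big_split /= mulr_sumr //.
Qed.

Definition eqv (G H : Fn) := forall T, BA T -> G T = H T.
Definition Rep (G : Fn) (s : lst) := Xl s /\ eqv G (evl s).
Definition SS (G : Fn) := exists s, Rep G s.
Definition p0 (G : Fn) : R := inf [set costl s | s in Rep G].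
Definition addF (G H : Fn) : Fn := fun T => G T + H T.
Definition sclF (k : C) (G : Fn) : Fn := fun T => k * G T.
Local Notation ZF := (fun _ : Tsp => (0 : C)).

Lemma p0_hlb G : has_lbound [set costl s | s in Rep G].
Proof. by exists 0 => _ [s [hs _] <-]; apply: costl_ge0. Qed.

Lemma p0_lb G s : Rep G s -> p0 G <= costl s.
Proof. by move=> h; apply: ge_inf; [exact: p0_hlb | exists s]. Qed.

Lemma p0_ge0 G : SS G -> 0 <= p0 G.
Proof.
move=> [s hs]; apply: lb_le_inf; first by exists (costl s), s.
by move=> _ [t [ht _] <-]; apply: costl_ge0.
Qed.

Lemma p0_adh G eps : SS G -> 0 < eps -> exists s, Rep G s /\ costl s < p0 G + eps.
Proof.
move=> [s hs] e0; have [|_ [t ht <-] h] := @inf_adherent _ [set costl s | s in Rep G] eps e0.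
  by split; [exists (costl s), s | exact: p0_hlb].
by exists t.
Qed.

Lemma Rep_add G H s t : Rep G s -> Rep H t -> Rep (addF G H) (s ++ t).
Proof.
move=> [hs es] [ht et]; split; first exact: Xl_cat.
by move=> T hT; rewrite /addF evl_cat es // et.
Qed.

Definition sclL (k : C) (s : lst) : lst := map (fun p => (k *: p.1, p.2)) s.

Lemma Xl_sclL k s : Xl s -> Xl (sclL k s).
Proof. by elim: s => //= p s IH [h1 h2]; split => //; apply: IH. Qed.

Lemma evl_sclL k s T : Xl s -> BA T -> evl (sclL k s) T = k * evl s T.
Proof.
move=> hs hT; elim: s hs => [|p s IH] /=; first by rewrite !evl_nil mulr0.
by move=> [hp hs]; rewrite !evl_cons /= IH // (TZ _ _ hT hp) mulrDr.
Qed.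

Lemma costl_sclL k s : costl (sclL k s) = nrmC k * costl s.
Proof.
elim: s => [|p s IH] /=; first by rewrite !costl_nil mulr0.
by rewrite !costl_cons /= IH nrmAZ mulrDr mulrA.
Qed.

Lemma Rep_scl G k s : Rep G s -> Rep (sclF k G) (sclL k s).
Proof.
move=> [hs es]; split; first exact: Xl_sclL.
by move=> T hT; rewrite /sclF evl_sclL // es.
Qed.

Lemma SS_add G H : SS G -> SS H -> SS (addF G H).
Proof. by move=> [s hs] [t ht]; exists (s ++ t); apply: Rep_add. Qed.

Lemma SS_scl k G : SS G -> SS (sclF k G).
Proof. by move=> [s hs]; exists (sclL k s); apply: Rep_scl. Qed.

Lemma Rep_Z : Rep ZF [::].
Proof. by split => // T _; rewrite evl_nil. Qed.

Lemma SS_Z : SS ZF.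
Proof. by exists [::]; apply: Rep_Z. Qed.

Lemma SS_evl s : Xl s -> SS (evl s).
Proof. by move=> hs; exists s; split. Qed.

Lemma p0_add G H : SS G -> SS H -> p0 (addF G H) <= p0 G + p0 H.
Proof.
move=> [s0 hs0] [t0 ht0].
rewrite -lerBlDr; apply: lb_le_inf; first by exists (costl s0), s0.
move=> _ [s hs <-]; rewrite lerBlDr addrC -lerBlDr.
apply: lb_le_inf; first by exists (costl t0), t0.
move=> _ [t ht <-]; rewrite lerBlDl -costl_cat; apply: p0_lb; exact: Rep_add.
Qed.

Lemma p0_scl k G : SS G -> p0 (sclF k G) <= nrmC k * p0 G.
Proof.
move=> [s0 hs0]; have k0 := nrmC_ge0 k.
have [k_eq0|kn0] := eqVneq (nrmC k) 0.
  rewrite k_eq0 mul0r; apply: (le_trans (p0_lb (Rep_scl k hs0))).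
  by rewrite costl_sclL k_eq0 mul0r.
have kpos : 0 < nrmC k by rewrite lt_def kn0 k0.
rewrite mulrC -ler_pdivrMr //; apply: lb_le_inf; first by exists (costl s0), s0.
move=> _ [s hs <-]; rewrite ler_pdivrMr // mulrC -costl_sclL; apply: p0_lb.
exact: Rep_scl.
Qed.

Lemma p0_eqv0 G : eqv G ZF -> p0 G <= 0.
Proof.
move=> h; rewrite -costl_nil; apply: p0_lb; split => // T hT; rewrite evl_nil; exact: h.
Qed.

Definition negF (G : Fn) : Fn := sclF (-1) G.

Definition subl (q : Fn -> R) :=
  (forall G H, SS G -> SS H -> q (addF G H) <= q G + q H) /\
  (forall (t : R) G, 0 <= t -> SS G -> q (sclF t%:C G) <= t * q G).

Ltac fe := apply: funext => ?; rewrite /negF /addF /sclF /= ?rmorphD ?rmorphM ?rmorphN ?rmorph0 ?rmorph1.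

Lemma SS_neg G : SS G -> SS (negF G).
Proof. exact: SS_scl. Qed.

Lemma sl_qZ q : subl q -> q ZF = 0.
Proof.
move=> [ha hs]; apply/eqP; rewrite eq_le; apply/andP; split.
  have := hs 0 ZF (lexx _) SS_Z; rewrite mul0r.
  by have -> : sclF 0%:C ZF = ZF by fe; rewrite mulr0.
have := ha ZF ZF SS_Z SS_Z.
have -> : addF ZF ZF = ZF by fe; rewrite addr0.
lra.
Qed.

Lemma sl_scl_eq q t G : subl q -> 0 <= t -> SS G -> q (sclF t%:C G) = t * q G.
Proof.
move=> hq t0 hG; have [ha hs] := hq.
have [->|tn0] := eqVneq t 0.
  have -> : sclF 0%:C G = ZF by fe; rewrite mul0r.
  by rewrite (sl_qZ hq) mul0r.
apply/eqP; rewrite eq_le hs //=.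
have tpos : 0 < t by rewrite lt_def tn0 t0.
have := hs (t^-1) (sclF t%:C G) _ (SS_scl _ hG); rewrite invr_ge0 => /(_ t0).
have -> : sclF (t^-1)%:C (sclF t%:C G) = G.
  by fe; rewrite mulrA -rmorphM mulVf // rmorph1 mul1r.
by move=> h; rewrite -ler_pdivlMl // mulrC.
Qed.

Lemma sl_lb q G : subl q -> SS G -> - q (negF G) <= q G.
Proof.
move=> hq hG; have [ha _] := hq; have := ha G (negF G) hG (SS_neg hG).
have -> : addF G (negF G) = ZF by fe; ring.
rewrite (sl_qZ hq); lra.
Qed.

Definition shift (q : Fn -> R) (y x : Fn) : R :=
  inf [set q (addF x (sclF t%:C y)) - t * q y | t in [set t : R | 0 <= t]].

Section Shift.
Variables (q : Fn -> R) (y : Fn).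
Hypotheses (hq : subl q) (hy : SS y).

Lemma shift_hlb x : SS x ->
  has_lbound [set q (addF x (sclF t%:C y)) - t * q y | t in [set t : R | 0 <= t]].
Proof.
move=> hx; exists (- q (negF x)) => _ [t t0 <-].
have [ha _] := hq.
have := ha _ _ (SS_add hx (SS_scl t%:C hy)) (SS_neg hx).
have -> : addF (addF x (sclF t%:C y)) (negF x) = sclF t%:C y by fe; ring.
rewrite (sl_scl_eq hq t0 hy); lra.
Qed.

Lemma shift_elem x t : SS x -> 0 <= t -> shift q y x <= q (addF x (sclF t%:C y)) - t * q y.
Proof. by move=> hx t0; apply: ge_inf; [exact: shift_hlb | exists t]. Qed.

Lemma shift_ne x : [set q (addF x (sclF t%:C y)) - t * q y | t in [set t : R | 0 <= t]] !=set0.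
Proof. by exists (q (addF x (sclF 0%:C y)) - 0 * q y), 0 => //=. Qed.

Lemma shift_le x : SS x -> shift q y x <= q x.
Proof.
move=> hx; apply: (le_trans (shift_elem hx (lexx 0))).
have -> : addF x (sclF 0%:C y) = x by fe; ring.
by rewrite mul0r subr0.
Qed.

Lemma shift_neg : shift q y (negF y) <= - q y.
Proof.
apply: (le_trans (shift_elem (SS_neg hy) ler01)).
have -> : addF (negF y) (sclF 1%:C y) = ZF by fe; ring.
by rewrite (sl_qZ hq) mul1r sub0r.
Qed.

Lemma shift_subl : subl (shift q y).
Proof.
have [ha hs] := hq; split.
- move=> x1 x2 h1 h2; rewrite -lerBlDr; apply: lb_le_inf; first exact: shift_ne.
  move=> _ [s s0 <-]; rewrite lerBlDr addrC -lerBlDr.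
  apply: lb_le_inf; first exact: shift_ne.
  move=> _ [t t0 <-]; rewrite lerBlDl.
  have st0 : 0 <= s + t by apply: addr_ge0.
  apply: (le_trans (shift_elem (SS_add h1 h2) st0)).
  have -> : addF (addF x1 x2) (sclF (s + t)%:C y) =
            addF (addF x1 (sclF s%:C y)) (addF x2 (sclF t%:C y)) by fe; ring.
  have := ha _ _ (SS_add h1 (SS_scl s%:C hy)) (SS_add h2 (SS_scl t%:C hy)).
  lra.
- move=> r x r0 hx.
  have [->|rn0] := eqVneq r 0.
    rewrite mul0r; apply: (le_trans (shift_elem (SS_scl _ hx) (lexx 0))).
    have -> : addF (sclF 0%:C x) (sclF 0%:C y) = ZF by fe; ring.
    by rewrite (sl_qZ hq) mul0r subr0.
  have rpos : 0 < r by rewrite lt_def rn0 r0.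
  rewrite mulrC -ler_pdivrMr //; apply: lb_le_inf; first exact: shift_ne.
  move=> _ [t t0 <-]; rewrite ler_pdivrMr //.
  have rt0 : 0 <= r * t by apply: mulr_ge0.
  apply: (le_trans (shift_elem (SS_scl _ hx) rt0)).
  have -> : addF (sclF r%:C x) (sclF (r * t)%:C y) = sclF r%:C (addF x (sclF t%:C y)) by fe; ring.
  have := hs r _ r0 (SS_add hx (SS_scl t%:C hy)).
  have -> : (q (addF x (sclF t%:C y)) - t * q y) * r = r * q (addF x (sclF t%:C y)) - r * t * q y by ring.
  move=> h; exact: lerB h (lexx _).
Qed.

End Shift.

Lemma p0_subl : subl p0.
Proof.
split; first exact: p0_add.
by move=> t G t0 hG; apply: (le_trans (p0_scl _ hG)); rewrite nrmCR ger0_norm.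
Qed.

Section HB.
Variable s0 : lst.
Hypothesis hs0 : Xl s0.
Let G0 := evl s0.
Let hG0 : SS G0 := SS_evl hs0.
Let p1 := shift p0 G0.

Definition cls (q : Fn -> R) := subl q /\ forall G, SS G -> q G <= p1 G.

Lemma p1_cls : cls p1.
Proof. by split => //; apply: shift_subl => //; exact: p0_subl. Qed.

Lemma p1_le_p0 G : SS G -> p1 G <= p0 G.
Proof. by move=> hG; apply: shift_le => //; exact: p0_subl. Qed.

Lemma cls_lb q G : cls q -> SS G -> - p1 (negF G) <= q G.
Proof.
move=> [hq hb] hG; apply: le_trans (sl_lb hq hG).
by rewrite lerN2; apply: hb; apply: SS_neg.
Qed.

Definition Tz := {q : Fn -> R | cls q}.
Definition Rz (a b : Tz) : bool := `[< forall G, SS G -> sval b G <= sval a G >].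

Lemma zorn_min : exists qq : Tz, premaximal Rz qq.
Proof.
apply: (ZL_preorder (exist _ p1 p1_cls)).
- by move=> a; apply/asboolP => G _; exact: lexx.
- move=> a b c /asboolP hab /asboolP hbc; apply/asboolP => G hG.
  exact: le_trans (hbc G hG) (hab G hG).
move=> Ach htot.
have [[a0 ha0]|nA] := pselect (exists a, Ach a); last first.
  by exists (exist _ p1 p1_cls) => s hs; exfalso; apply: nA; exists s.
pose qi (G : Fn) := inf [set sval a G | a in Ach].
have hlb G : SS G -> has_lbound [set sval a G | a in Ach].
  by move=> hG; exists (- p1 (negF G)) => _ [a _ <-]; apply: cls_lb (svalP a) hG.
have hne G : [set sval a G | a in Ach] !=set0 by exists (sval a0 G), a0.
have qi_le a G : Ach a -> SS G -> qi G <= sval a G.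
  by move=> ha hG; apply: ge_inf; [exact: hlb | exists a].
have qcls : cls qi.
  split; last first.
    move=> G hG; apply: (le_trans (qi_le a0 G ha0 hG)); exact: (proj2 (svalP a0)).
  split.
  - move=> G H hG hH; rewrite -lerBlDr; apply: lb_le_inf => // _ [a1 h1 <-].
    rewrite lerBlDr addrC -lerBlDr; apply: lb_le_inf => // _ [a2 h2 <-].
    rewrite lerBlDl.
    have [/asboolP r12|/asboolP r21] := htot a1 a2 h1 h2.
    + apply: (le_trans (qi_le a2 _ h2 (SS_add hG hH))).
      apply: (le_trans (proj1 (proj1 (svalP a2)) G H hG hH)).
      by apply: lerD => //; apply: r12.
    + apply: (le_trans (qi_le a1 _ h1 (SS_add hG hH))).
      apply: (le_trans (proj1 (proj1 (svalP a1)) G H hG hH)).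
      by apply: lerD => //; apply: r21.
  - move=> t G t0 hG.
    have [->|tn0] := eqVneq t 0.
      rewrite mul0r; apply: (le_trans (qi_le a0 _ ha0 (SS_scl _ hG))).
      by apply: le_trans (proj2 (proj1 (svalP a0)) 0 G (lexx _) hG) _; rewrite mul0r.
    have tpos : 0 < t by rewrite lt_def tn0 t0.
    rewrite mulrC -ler_pdivrMr //; apply: lb_le_inf => // _ [a ha <-].
    rewrite ler_pdivrMr // mulrC.
    apply: (le_trans (qi_le a _ ha (SS_scl _ hG))).
    exact: (proj2 (proj1 (svalP a)) t G t0 hG).
exists (exist _ qi qcls) => a ha; apply/asboolP => G hG /=.
exact: qi_le.
Qed.

Section Lin.
Variable qq : Tz.
Hypothesis hmin : premaximal Rz qq.
Let q := sval qq.
Let hq : subl q := proj1 (svalP qq).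
Let hqp : forall G, SS G -> q G <= p1 G := proj2 (svalP qq).

Lemma q_neg y : SS y -> q (negF y) = - q y.
Proof.
move=> hy.
have hc : cls (shift q y).
  split; first exact: shift_subl.
  by move=> G hG; apply: le_trans (shift_le hq hy hG) (hqp hG).
have /asboolP h := @hmin (exist _ (shift q y) hc) (asboolT (fun G hG => shift_le hq hy hG)).
have h1 := h _ (SS_neg hy); have h2 := shift_neg hq hy; have h3 := sl_lb hq hy.
simpl in h1; rewrite -/q in h1; lra.
Qed.

Lemma q_add G H : SS G -> SS H -> q (addF G H) = q G + q H.
Proof.
move=> hG hH; apply/eqP; rewrite eq_le (proj1 hq G H hG hH) /=.
have := proj1 hq _ _ (SS_neg hG) (SS_neg hH).
have -> : addF (negF G) (negF H) = negF (addF G H) by fe; ring.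
by rewrite !q_neg //; [lra | exact: SS_add].
Qed.

Lemma q_scl (t : R) G : SS G -> q (sclF t%:C G) = t * q G.
Proof.
move=> hG; have [t0|tn] := leP 0 t; first exact: sl_scl_eq.
have -> : sclF t%:C G = negF (sclF (- t)%:C G) by fe; ring.
rewrite q_neg; last exact: SS_scl.
rewrite sl_scl_eq //; [ring | lra].
Qed.

Lemma q_eqv_le G H : SS G -> SS H -> eqv G H -> q G <= q H.
Proof.
move=> hG hH e.
have hD : SS (addF G (negF H)) by apply: SS_add => //; exact: SS_neg.
have -> : G = addF H (addF G (negF H)) by fe; ring.
rewrite q_add //; rewrite gerDl.
apply: (le_trans (hqp hD)); apply: (le_trans (p1_le_p0 hD)).
apply: p0_eqv0 => T hT; rewrite /addF /negF /sclF /= (e T hT); ring.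
Qed.

Lemma q_eqv G H : SS G -> SS H -> eqv G H -> q G = q H.
Proof.
move=> hG hH e; apply/eqP; rewrite eq_le !q_eqv_le //.
by move=> T hT; rewrite e.
Qed.

Definition L (G : Fn) : C := (q G)%:C - 'i%C * (q (sclF 'i%C G))%:C.

Lemma L_add G H : SS G -> SS H -> L (addF G H) = L G + L H.
Proof.
move=> hG hH; rewrite /L.
have -> : sclF 'i%C (addF G H) = addF (sclF 'i%C G) (sclF 'i%C H) by fe; ring.
rewrite !q_add //; try exact: SS_scl.
rewrite !rmorphD; ring.
Qed.

Lemma L_scl k G : SS G -> L (sclF k G) = k * L G.
Proof.
move=> hG; case: k => a b.
have -> : a +i* b = a%:C + 'i%C * b%:C by rewrite [LHS]complexE.
rewrite /L.
have -> : sclF 'i%C (sclF (a%:C + 'i%C * b%:C) G) =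
          addF (sclF a%:C (sclF 'i%C G)) (sclF (- b)%:C G).
  fe.
  have hi0 : 'i%C * 'i%C = -1 :> C by rewrite -expr2 sqr_i.
  rewrite mulrA mulrDr mulrA hi0; ring.
have -> : sclF (a%:C + 'i%C * b%:C) G = addF (sclF a%:C G) (sclF b%:C (sclF 'i%C G)) by fe; ring.
have hiG : SS (sclF 'i%C G) by exact: SS_scl.
rewrite !q_add; try by repeat apply: SS_scl.
rewrite !q_scl //.
rewrite !rmorphD !rmorphM !rmorphN.
have hi : 'i%C * 'i%C = -1 :> C by rewrite -expr2 sqr_i.
apply/eqP; rewrite -subr_eq0.
set x := (q G)%:C; set y := (q (sclF 'i%C G))%:C.
have -> : a%:C * x + b%:C * y - 'i%C * (a%:C * y + - b%:C * x) -
    (a%:C + 'i%C * b%:C) * (x - 'i%C * y) = b%:C * y * (1 + 'i%C * 'i%C) by ring.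
by rewrite hi addrN mulr0.
Qed.

Lemma L_Z : L ZF = 0.
Proof.
rewrite /L; have -> : sclF 'i%C ZF = ZF by fe; ring.
by rewrite (sl_qZ hq) rmorph0 mulr0 subr0.
Qed.

Lemma L_eqv G H : SS G -> SS H -> eqv G H -> L G = L H.
Proof.
move=> hG hH e; rewrite /L (q_eqv hG hH e) (q_eqv (SS_scl 'i%C hG) (SS_scl 'i%C hH)) //.
by move=> T hT; rewrite /sclF e.
Qed.

Lemma ReL G : complex.Re (L G) = q G.
Proof. exact: Re_sub_i. Qed.

Lemma L_bound G : SS G -> nrmC (L G) <= p0 G.
Proof.
move=> hG; set z := L G.
have [z0|zn0] := eqVneq z 0; first by rewrite z0 nrmC0; exact: p0_ge0.
have nn0 : nrmC z != 0 by apply: contra zn0 => /eqP /nrmC_eq0 ->.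
set n := nrmC z in nn0 *.
pose w := z^* * (n^-1)%:C.
have hw : L (sclF w G) = n%:C.
  rewrite L_scl // -/z /w.
  have -> : z^* * (n^-1)%:C * z = (z * z^*) * (n^-1)%:C by ring.
  rewrite -sqr_normc normCE -rmorphXn -rmorphM; congr (_%:C).
  by rewrite expr2 -mulrA mulfV // mulr1.
have nw : nrmC w = 1.
  rewrite /w nrmCM nrmCR /nrmC normcJ -/(nrmC z) -/n ger0_norm ?mulfV //.
  by rewrite invr_ge0; exact: nrmC_ge0.
have hwG : SS (sclF w G) by exact: SS_scl.
have : n = q (sclF w G) by rewrite -ReL hw.
move=> ->; apply: (le_trans (hqp hwG)); apply: (le_trans (p1_le_p0 hwG)).
by apply: (le_trans (p0_scl _ hG)); rewrite nw mul1r.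
Qed.

Definition Tst : Tsp := fun a phi => L (fun T => T a phi).

Lemma Rep_el a phi : X phi -> Rep (fun T => T a phi) [:: (a, phi)].
Proof. by move=> h; split => // T _; rewrite evl_cons evl_nil addr0. Qed.

Lemma SS_el a phi : X phi -> SS (fun T => T a phi).
Proof. by move=> h; exists [:: (a, phi)]; apply: Rep_el. Qed.

Lemma Tst_bnd a phi : X phi -> nrmC (Tst a phi) <= nrmA a * dnorm phi.
Proof.
move=> h; apply: (le_trans (L_bound (SS_el a h))).
apply: (le_trans (p0_lb (Rep_el a h))).
by rewrite costl_cons costl_nil addr0.
Qed.

Lemma Tst_BA : BA Tst.
Proof.
split.
- move=> a; split.
    move=> k phi psi hphi hpsi; rewrite /Tst -L_scl; last exact: SS_el.
    rewrite -L_add; [|exact: SS_scl (SS_el a hphi)|exact: SS_el].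
    apply: L_eqv; [exact: SS_el (X_lin k hphi hpsi)| |].
      by apply: SS_add; [exact: SS_scl (SS_el a hphi)|exact: SS_el].
    move=> T hT; rewrite /addF /sclF /=; case: (BA_dualX a hT) => hl _; exact: hl.
  by exists (nrmA a) => phi hphi; exact: Tst_bnd.
- move=> k a b phi hphi; rewrite /Tst -L_scl; last exact: SS_el.
  rewrite -L_add; [|exact: SS_scl (SS_el a hphi)|exact: SS_el].
  apply: L_eqv; [exact: SS_el| |].
    by apply: SS_add; [exact: SS_scl (SS_el a hphi)|exact: SS_el].
  move=> T hT; rewrite /addF /sclF /=; case: hT => _ hl _ _; exact: hl.
- exists 1 => a; rewrite mul1r; apply: xnorm_le => phi hphi hd.
  apply: (le_trans (Tst_bnd a hphi)); rewrite -[X in _ <= X]mulr1.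
  by apply: ler_wpM2l => //; exact: nrmA_ge0.
- move=> a b phi hphi; rewrite /Tst; apply: L_eqv; [exact: SS_el|exact: SS_el (X_act b hphi)|].
  by move=> T hT; case: hT => _ _ _ hm; exact: hm.
Qed.

Lemma Tst_M : Mnorm X Tst <= 1.
Proof.
apply: Mnorm_le => a ha; apply: xnorm_le => phi hphi hd.
apply: (le_trans (Tst_bnd a hphi)).
have := nrmA_ge0 a; have := dnorm_ge0 (X_dual hphi) => h1 h2.
rewrite -[1]mulr1; apply: ler_pM => //.
Qed.

Lemma evl_Tst s : Xl s -> evl s Tst = L (evl s).
Proof.
elim: s => [|p s IH] /=.
  rewrite evl_nil; have -> : evl [::] = ZF by apply: funext => T; rewrite evl_nil.
  by rewrite L_Z.
move=> [hp hs]; rewrite evl_cons IH //.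
have -> : evl (p :: s) = addF (fun T => T p.1 p.2) (evl s).
  by apply: funext => T; rewrite evl_cons.
rewrite L_add //; [exact: SS_el | exact: SS_evl].
Qed.

Lemma key_ineq : p0 G0 <= nrmC (G0 Tst).
Proof.
rewrite /G0 evl_Tst //; apply: le_trans (Re_le_nrmC _); rewrite ReL.
have h1 := hqp (SS_neg hG0).
have h2 : p1 (negF G0) <= - p0 G0 by apply: shift_neg => //; exact: p0_subl.
have h3 := sl_lb hq hG0.
change (p0 G0 <= q G0).
lra.
Qed.

End Lin.

Lemma KEY_HB : exists T, BA T /\ Mnorm X T <= 1 /\ p0 G0 <= nrmC (G0 T).
Proof.
have [qq hmin] := zorn_min.
exists (Tst qq); split; first exact: Tst_BA.
split; [exact: Tst_M | exact: key_ineq].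
Qed.

End HB.

Lemma KEY s eps : Xl s -> 0 < eps ->
  exists t, Xl t /\ eqv (evl s) (evl t) /\ costl t <= dMnorm mul X (evl s) + eps.
Proof.
move=> hs e0; have [T [hT [hM hp]]] := KEY_HB hs.
have h1 : p0 (evl s) <= dMnorm mul X (evl s).
  apply: (le_trans hp); apply: dMnorm_ub => //; exists (costl s); exact: evl_bnd.
have [t [[ht et] hc]] := p0_adh (SS_evl hs) e0.
exists t; split => //; split => //.
apply: ltW; apply: (lt_le_trans hc); exact: lerD.
Qed.

Lemma Xl_map (I : Type) (f : I -> A) (g : I -> A -> C) (r : seq I) :
  (forall i, X (g i)) -> Xl (map (fun i => (f i, g i)) r).
Proof. by move=> h; elim: r => //= i r IH; split. Qed.

Lemma Xl_catE s t : Xl (s ++ t) -> Xl s /\ Xl t.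
Proof. by elim: s => //= p s IH [h1 /IH [h2 h3]]. Qed.

Lemma Xl_take n s : Xl s -> Xl (take n s).
Proof. by elim: s n => [|p s IH] [|n] //= [h1 h2]; split => //; apply: IH. Qed.

Definition dflt : A * (A -> C) := (0, Z0).

Lemma Xl_nth s k : Xl s -> X (nth dflt s k).2.
Proof.
elim: s k => [|p s IH] [|k] /=; try by move=> _; exact: X0.
- by case.
- by case=> _ h; apply: IH.
Qed.

Lemma costl_take N s : Xl s -> costl (take N s) <= costl s.
Proof.
move=> hs; rewrite -{2}(cat_take_drop N s) costl_cat lerDl.
rewrite -(cat_take_drop N s) in hs; apply: costl_ge0; exact: (Xl_catE hs).2.
Qed.

Lemma sum_mkseq (a : nat -> A) (phi : nat -> A -> C) N T :
  \sum_(0 <= i < N) elem (a i) (phi i) T = evl (mkseq (fun i => (a i, phi i)) N) T.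
Proof. by rewrite /evl /mkseq big_map /index_iota subn0. Qed.

Lemma series_mkseq (a : nat -> A) (phi : nat -> A -> C) N :
  series (fun i => nrmA (a i) * dnorm (phi i)) N = costl (mkseq (fun i => (a i, phi i)) N).
Proof. by rewrite /series /= /costl /mkseq big_map /index_iota subn0. Qed.

Lemma series_nd (a : nat -> A) (phi : nat -> A -> C) : (forall i, X (phi i)) ->
  {homo series (fun i => nrmA (a i) * dnorm (phi i)) : n m / (n <= m)%N >-> n <= m}.
Proof.
move=> h; apply: nondecreasing_series => n _ _.
by apply: mulr_ge0; [exact: nrmA_ge0 | exact: dnorm_ge0 (X_dual (h n))].
Qed.

Lemma rep_cost_ge0 F a phi : is_rep mul X F a phi -> 0 <= rep_cost a phi.
Proof.
case=> hX hcv _; have := nondecreasing_cvgn_le (series_nd a hX) hcv 0.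
by rewrite /series /= big_geq.
Qed.

Section WithF.
Variable F : Fn.
Hypothesis hF : goodH F.

Lemma rep_LB a phi : is_rep mul X F a phi -> dMnorm mul X F <= rep_cost a phi.
Proof.
move=> hr; have [hX hcv hlim] := hr.
apply/ler_addgt0Pr => e e0.
have [N _ hN] := cvgr_dist_le _ _ hlim _ e0.
have := hN N (leqnn N); rewrite sub0r normrN => hd.
set s := mkseq (fun i => (a i, phi i)) N.
have hs : Xl s by apply: Xl_map.
have hD : goodH (fun T => F T - evl s T) by apply: goodB => //; exact: evl_good.
have hD' : dMnorm mul X (fun T => F T - evl s T) <= e.
  apply: le_trans (ler_norm _) _; apply: le_trans hd.
  suff -> : (fun T => F T - evl s T) =
    (fun T => F T - \sum_(0 <= i < N) elem (a i) (phi i) T) by [].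
  by apply: funext => T; rewrite sum_mkseq.
have hcs : costl s <= rep_cost a phi.
  rewrite -series_mkseq; exact: nondecreasing_cvgn_le (series_nd a hX) hcv N.
apply: dMnorm_le; last first.
  apply: addr_ge0; [exact: rep_cost_ge0 hr | exact: ltW].
move=> T hT; have -> : F T = (F T - evl s T) + evl s T by ring.
apply: (le_trans (nrmCD _ _)); rewrite mulrDl addrC.
apply: lerD.
  apply: (le_trans (evl_bnd hs hT)); apply: ler_wpM2r => //; exact: Mnorm_ge0.
apply: (le_trans (dMnorm_bnd hD hT)); apply: ler_wpM2r => //; exact: Mnorm_ge0.
Qed.

Section Constr.
Hypothesis hQ : forall eps, 0 < eps ->
  exists s, Xl s /\ dMnorm mul X (fun T => F T - evl s T) <= eps.
Variable e : R.
Hypothesis e0 : 0 < e.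

Let x : R := 2^-1.
Let g (n : nat) : R := e * x ^+ n.

Let x_gt0 : 0 < x. Proof. by rewrite /x invr_gt0. Qed.
Let g_gt0 n : 0 < g n. Proof. by rewrite /g mulr_gt0 // exprn_gt0. Qed.
Let g_ge0 n : 0 <= g n. Proof. exact: ltW. Qed.
Let gS n : g n.+1 = g n / 2.
Proof. by rewrite /g exprS /x; ring. Qed.
Let g0 : g 0%N = e. Proof. by rewrite /g expr0 mulr1. Qed.

Let hF_ex : exists c, bndH F c. Proof. exact: hF.2. Qed.

Lemma constr_main : exists a phi, is_rep mul X F a phi /\ rep_cost a phi <= dMnorm mul X F + e.
Proof.
have : forall n, exists s, Xl s /\ dMnorm mul X (fun T => F T - evl s T) <= g n / 8.
  by move=> n; apply: hQ; apply: divr_gt0.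
move=> /choice [sl hsl].
pose D n := fun T => F T - evl (sl n) T.
have goodDn n : goodH (D n) by apply: goodB => //; apply: evl_good; exact: (hsl n).1.
have bndD n : bndH (D n) (g n / 8).
  move=> T hT; apply: (le_trans (dMnorm_bnd (goodDn n) hT)).
  apply: ler_wpM2r; [exact: Mnorm_ge0 | exact: (hsl n).2].
pose dl m := sl m.+1 ++ sclL (-1) (sl m).
have Xl_dl m : Xl (dl m).
  by apply: Xl_cat; [exact: (hsl _).1 | apply: Xl_sclL; exact: (hsl _).1].
have evl_dl m T : BA T -> evl (dl m) T = D m T - D m.+1 T.
  move=> hT; rewrite /dl /D evl_cat evl_sclL //; last exact: (hsl _).1.
  ring.
have blk : forall n, exists t, Xl t /\
    (if n is m.+1 then eqv (evl (dl m)) (evl t) /\ costl t <= 3 / 8 * g m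
     else eqv (evl (sl 0%N)) (evl t) /\ costl t <= dMnorm mul X F + g 0%N / 4).
  case=> [|m].
    have h1 : dMnorm mul X (evl (sl 0%N)) <= dMnorm mul X F + g 0%N / 8.
      apply: dMnorm_le; last first.
        by apply: addr_ge0; [exact: dMnorm_ge0 | apply: divr_ge0].
      move=> T hT; have -> : evl (sl 0%N) T = F T - D 0%N T by rewrite /D; ring.
      apply: (le_trans (nrmCD _ _)); rewrite nrmCN mulrDl.
      apply: lerD; [exact: dMnorm_bnd | exact: bndD].
    have [t [ht [et ct]]] := KEY (hsl 0%N).1 (divr_gt0 (g_gt0 0%N) (ltr0Sn _ 7)).
    exists t; split => //; split => //; apply: (le_trans ct).
    have := g_ge0 0%N; lra.
  have h1 : dMnorm mul X (evl (dl m)) <= g m / 8 + g m.+1 / 8.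
    apply: dMnorm_le; last by apply: addr_ge0; apply: divr_ge0.
    move=> T hT; rewrite evl_dl //.
    apply: (le_trans (nrmCD _ _)); rewrite nrmCN mulrDl.
    by apply: lerD; apply: bndD.
  have [t [ht [et ct]]] := KEY (Xl_dl m) (divr_gt0 (g_gt0 m) (ltr0Sn _ 7)).
  exists t; split => //; split => //; apply: (le_trans ct).
  have := g_ge0 m; have := gS m; lra.
move: blk => /choice [bb hbb].
have Xl_bb n : Xl (bb n) by case: (hbb n).
pose pb n := dflt :: bb n.
pose full n := flatten (mkseq pb n).
have full0 : full 0%N = [::] by [].
have fullS n : full n.+1 = full n ++ pb n by rewrite /full mkseqS flatten_rcons.
have Xl_pb n : Xl (pb n) by split; [exact: X0 | exact: Xl_bb].
have Xl_full n : Xl (full n).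
  by elim: n => [|n IH] //; rewrite fullS; apply: Xl_cat.
have evl_pb n T : BA T -> evl (pb n) T = evl (bb n) T.
  by move=> hT; rewrite evl_cons /= (T0 hT X0) add0r.
have costl_pb n : costl (pb n) = costl (bb n).
  by rewrite costl_cons /= nrmA0 mul0r add0r.
have tele n T : BA T -> evl (full n.+1) T = evl (sl n) T.
  move=> hT; elim: n => [|n IH].
    rewrite fullS full0 cat0s evl_pb //; case: (hbb 0%N) => _ [e1 _].
    by rewrite e1.
  rewrite fullS evl_cat IH evl_pb //; case: (hbb n.+1) => _ [e1 _].
  by rewrite -e1 // evl_dl // /D; ring.
have size_full n : (n <= size (full n))%N.
  by elim: n => [|n IH] //; rewrite fullS size_cat /= addnS ltnS (leq_trans IH) ?leq_addr.
have full_prefix n m : (n <= m)%N -> exists r, full m = full n ++ r.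
  elim: m => [|m IH].
    by rewrite leqn0 => /eqP ->; exists [::]; rewrite cats0.
  rewrite leq_eqVlt => /orP [/eqP ->|]; first by exists [::]; rewrite cats0.
  rewrite ltnS => /IH [r hr]; exists (r ++ pb m).
  by rewrite fullS hr catA.
have cost_tail m k : costl (full (m.+1 + k)%N) <= costl (full m.+1) + 3 / 4 * (g m - g (m + k)%N).
  elim: k => [|k IH]; first by rewrite !addn0 subrr mulr0 addr0.
  rewrite addSn in IH; rewrite !addnS addSn fullS costl_cat costl_pb.
  case: (hbb (m + k)%N.+1) => _ [_ hc].
  have hg := gS (m + k)%N.
  lra.
have cost_full n : costl (full n) <= dMnorm mul X F + e.
  case: n => [|n]; first by rewrite full0 costl_nil; apply: addr_ge0; [exact: dMnorm_ge0 | exact: ltW].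
  have := cost_tail 0%N n; rewrite add1n add0n (fullS 0%N) full0 cat0s costl_pb.
  case: (hbb 0%N) => _ [_ hc]; have := g_ge0 n; rewrite g0 in hc *.
  lra.
pose aa k := (nth dflt (full k.+1) k).1.
pose pp k := (nth dflt (full k.+1) k).2.
have hX i : X (pp i) by apply: Xl_nth.
have nth_full n k : (k < size (full n))%N -> nth dflt (full n) k = nth dflt (full k.+1) k.
  move=> hk; have [r1 e1] := full_prefix n (maxn n k.+1) (leq_maxl _ _).
  have [r2 e2] := full_prefix k.+1 (maxn n k.+1) (leq_maxr _ _).
  have hk2 : (k < size (full k.+1))%N by apply: size_full.
  have h1 : nth dflt (full n) k = nth dflt (full (maxn n k.+1)) k by rewrite e1 nth_cat hk.
  have h2 : nth dflt (full k.+1) k = nth dflt (full (maxn n k.+1)) k by rewrite e2 nth_cat hk2.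
  by rewrite h1 h2.
have take_full n N : (N <= size (full n))%N -> take N (full n) = mkseq (fun i => (aa i, pp i)) N.
  elim: N => [|N IH] hN; first by rewrite take0.
  rewrite (take_nth dflt hN) mkseqS IH ?(ltnW hN) //.
  by rewrite /aa /pp -(nth_full n N hN) -surjective_pairing.
have ser N : series (fun i => nrmA (aa i) * dnorm (pp i)) N <= dMnorm mul X F + e.
  rewrite series_mkseq -(take_full N N (size_full N)).
  exact: le_trans (costl_take _ (Xl_full N)) (cost_full N).
have hcv : cvgn (series (fun i => nrmA (aa i) * dnorm (pp i))).
  apply: nondecreasing_is_cvgn; first exact: series_nd.
  by exists (dMnorm mul X F + e) => _ [N _ <-]; apply: ser.
exists aa, pp; split; last first.
  by apply: limr_le => //; apply: nearW => N; apply: ser.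
split => //.
apply/cvgrPdist_le => eps eps0.
have hg : g @ \oo --> (0 : R).
  have -> : g = geometric e x by [].
  apply: cvg_geometric; rewrite ger0_norm ?(ltW x_gt0) // /x invf_lt1 //.
  by rewrite ltr1n.
have [m _ hm] := cvgr_dist_le _ _ hg _ eps0.
have := hm m (leqnn m); rewrite sub0r normrN ger0_norm // => hgm.
exists (size (full m.+1)) => // N hN.
have hmN : (m.+1 <= N)%N by apply: leq_trans (size_full _) hN.
set s := mkseq (fun i => (aa i, pp i)) N.
have hs : Xl s by apply: Xl_map.
have hgood : goodH (fun T => F T - evl s T) by apply: goodB => //; exact: evl_good.
have -> : (fun T => F T - \sum_(0 <= i < N) elem (aa i) (pp i) T) = (fun T => F T - evl s T).
  by apply: funext => T; rewrite sum_mkseq.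
rewrite sub0r normrN ger0_norm; last by apply: dMnorm_ge0; exact: hgood.2.
apply: le_trans hgm.
have [r er] := full_prefix m.+1 N hmN.
have es : s = full m.+1 ++ take (N - size (full m.+1))%N r.
  by rewrite /s -(take_full N N (size_full N)) er take_cat ltnNge hN.
have Xr : Xl r by have := Xl_full N; rewrite er => /Xl_catE [].
have hcr : costl (take (N - size (full m.+1))%N r) <= 3 / 4 * g m.
  apply: le_trans (costl_take _ Xr) _.
  have := cost_tail m (N - m.+1)%N; rewrite subnKC // er costl_cat.
  have := g_ge0 (m + (N - m.+1))%N; lra.
apply: dMnorm_le => // T hT.
have -> : F T - evl s T = D m T - evl (take (N - size (full m.+1))%N r) T.
  by rewrite es evl_cat tele // /D; ring.
apply: (le_trans (nrmCD _ _)); rewrite nrmCN.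
have hM := Mnorm_ge0 hT.
have Xtr : Xl (take (N - size (full m.+1))%N r) by apply: Xl_take.
apply: le_trans (lerD (bndD m T hT) (evl_bnd Xtr hT)) _.
rewrite -mulrDl; apply: ler_wpM2r => //.
have := g_ge0 m; lra.
Qed.

End Constr.
End WithF.

End Main.

Theorem mainTheorem2 (R : realType) (A : completeNormedModType R[i])
  (mul : A -> A -> A) (X : set (A -> R[i]))
  (F : (A -> (A -> R[i]) -> R[i]) -> R[i]) :
  banach_algebra_mul mul ->
  closed_left_submodule mul X ->
  in_dualBA mul X F ->
  (in_QX mul X F <->
     exists (a : nat -> A) (phi : nat -> A -> R[i]), is_rep mul X F a phi) /\
  (in_QX mul X F ->
     dMnorm mul X F =
       inf [set s | exists (a : nat -> A) (phi : nat -> A -> R[i]),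
                      is_rep mul X F a phi /\ s = rep_cost a phi]).
Proof.
move=> _ HX hFd.
have hF : goodH mul X F := hFd.
have QtoL : in_QX mul X F -> forall eps, 0 < eps ->
    exists s, Xl X s /\ dMnorm mul X (fun T => F T - evl s T) <= eps.
  move=> [_ hq] eps e0; have [G [n [a [phi [hX EG]]]] hG] := hq eps e0.
  exists (map (fun i => (a i, phi i)) (index_enum 'I_n)); split; first exact: Xl_map.
  suff -> : (fun T => F T - evl [seq (a i, phi i) | i <- index_enum 'I_n] T) =
            (fun T => F T - G T) by [].
  by apply: funext => T; rewrite EG /evl big_map.
have constr : in_QX mul X F -> forall e, 0 < e -> exists a phi,
    is_rep mul X F a phi /\ rep_cost a phi <= dMnorm mul X F + e.
  by move=> hQ e e0; apply: (constr_main HX hF (QtoL hQ) e0).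
split.
  split.
    by move=> hQ; have [a [phi [hr _]]] := constr hQ 1 ltr01; exists a, phi.
  move=> [a [phi hr]]; split => // eps e0.
  have [hX hcv hlim] := hr.
  have [N _ hN] := cvgr_dist_le _ _ hlim _ e0.
  have := hN N (leqnn N); rewrite sub0r normrN => hd.
  exists (fun T => \sum_(i < N) elem (a i) (phi i) T).
    by exists N, (fun i : 'I_N => a i), (fun i : 'I_N => phi i); split.
  apply: le_trans (ler_norm _) _; apply: le_trans hd.
  suff -> : (fun T => F T - \sum_(i < N) elem (a i) (phi i) T) =
    (fun T => F T - \sum_(0 <= i < N) elem (a i) (phi i) T) by [].
  by apply: funext => T; rewrite big_mkord.
move=> hQ; apply/eqP; rewrite eq_le; apply/andP; split.
  apply: lb_le_inf.
    by have [a [phi [hr _]]] := constr hQ 1 ltr01; exists (rep_cost a phi), a, phi.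
  move=> _ [a [phi [hr ->]]].
exact (rep_LB HX hF hr).
apply/ler_addgt0Pr => e e0; have [a [phi [hr hc]]] := constr hQ e e0.
apply: le_trans hc; apply: ge_inf; last by exists a, phi.
by exists 0 => _ [a' [phi' [hr' ->]]]; exact (rep_cost_ge0 HX hr').
Qed.
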